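(* Assume $F$ is $K$-smooth with $\ell\in\mathrm{int}(K)$ and strongly $K$-convex with $\mu\in\mathrm{int}(K)$, let $e\in\mathrm{int}(K)$, $\gamma\in(0,1)$, and let $\{x^k\}$ be generated by Algorithm 5, assumed not to terminate ($d^k\neq0$ for all $k$). Let $L_{\max}:=\max_{c^*\in C_e}\langle c^*,\ell\rangle$, $t_{\min}:=\min\{\gamma/L_{\max},1\}$, $\mu_{\min}:=\min_{c^*\in C_e}\langle c^*,\mu\rangle$. Then: (i) $\{x^k\}$ converges to an efficient solution $x^*$ of $\min_K F(x)$; (ii) $\|x^{k+1}-x^*\|\le\sqrt{1-t_{\min}\mu_{\min}}\,\|x^k-x^*\|$ for all $k\ge0$.
   Context: $K\subset\mathbb{R}^m$ closed convex pointed cone with nonempty interior; $y\preceq_K y'$ iff $y'-y\in K$. $K^*=\{c:\langle c,y\rangle\ge0\ \forall y\in K\}$; $C_e:=\{c^*\in K^*:\langle c^*,e\rangle=1\}$. $F:\mathbb{R}^n\to\mathbb{R}^m$ differentiable with Jacobian $JF$. Strongly $K$-convex with $\mu$: $JF(x)(y-x)+\tfrac12\|y-x\|^2\mu\preceq_K F(y)-F(x)$ $\forall x,y$; $K$-smooth with $\ell$: $F(y)-F(x)\preceq_K JF(x)(y-x)+\tfrac12\|y-x\|^2\ell$ $\forall x,y$. Efficient: no $x$ with $F(x)\preceq_K F(x^* )$, $F(x)\neq F(x^* )$. Algorithm 5: given $x^0$, for $k=0,1,\dots$: $d^k:=\arg\min_{d}\max_{c^*\in C_e}\langle c^*,JF(x^k)d\rangle+\tfrac12\|d\|^2$;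 if $d^k=0$ stop; otherwise $t_k:=\max\{\gamma^j:j\in\mathbb{N},\ F(x^k+\gamma^jd^k)-F(x^k)\preceq_K\gamma^j(JF(x^k)d^k+\tfrac12\|d^k\|^2e)\}$ and $x^{k+1}:=x^k+t_kd^k$. *)

(* Defs.v *)
From HB Require Import structures.
From mathcomp Require Import all_boot all_order all_algebra.
From mathcomp Require Import all_classical all_reals all_analysis.
Set Implicit Arguments. Unset Strict Implicit. Unset Printing Implicit Defensive.
Import Order.TTheory GRing.Theory Num.Theory.
Import numFieldNormedType.Exports.
Local Open Scope classical_set_scope.
Local Open Scope ring_scope.

Section Defs.
Variable R : realType.

Definition dotp (p : nat) (u v : 'rV[R]_p) : R := \sum_(i < p) u 0 i * v 0 i.
Definition enorm (p : nat) (u : 'rV[R]_p) : R := Num.sqrt (dotp u u).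

Definition is_cone (m : nat) (K : set 'rV[R]_m) : Prop :=
  forall (t : R) y, 0 <= t -> K y -> K (t *: y).
Definition is_convex (m : nat) (K : set 'rV[R]_m) : Prop :=
  forall (t : R) y z, 0 <= t <= 1 -> K y -> K z -> K (t *: y + (1 - t) *: z).
Definition is_pointed (m : nat) (K : set 'rV[R]_m) : Prop :=
  forall y, K y -> K (- y) -> y = 0.
Definition good_cone (m : nat) (K : set 'rV[R]_m) : Prop :=
  [/\ closed K, is_convex K, is_cone K, is_pointed K & exists z, interior K z].

Definition Kle (m : nat) (K : set 'rV[R]_m) (y y' : 'rV[R]_m) : Prop := K (y' - y).

Definition Kdual (m : nat) (K : set 'rV[R]_m) : set 'rV[R]_m :=
  [set c | forall y, K y -> 0 <= dotp c y].
Definition Ce (m : nat) (K : set 'rV[R]_m) (e : 'rV[R]_m) : set 'rV[R]_m :=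
  [set c | Kdual K c /\ dotp c e = 1].

Definition strongly_Kconvex (n m : nat) (K : set 'rV[R]_m)
  (F : 'rV[R]_n -> 'rV[R]_m) (mu : 'rV[R]_m) : Prop :=
  forall x y, Kle K ('d F x (y - x) + (2^-1 * enorm (y - x) ^+ 2) *: mu) (F y - F x).
Definition Ksmooth (n m : nat) (K : set 'rV[R]_m)
  (F : 'rV[R]_n -> 'rV[R]_m) (l : 'rV[R]_m) : Prop :=
  forall x y, Kle K (F y - F x) ('d F x (y - x) + (2^-1 * enorm (y - x) ^+ 2) *: l).

Definition efficient (n m : nat) (K : set 'rV[R]_m) (F : 'rV[R]_n -> 'rV[R]_m)
  (xs : 'rV[R]_n) : Prop :=
  ~ exists x, Kle K (F x) (F xs) /\ F x <> F xs.

(* objective of the direction subproblem: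
   max_{c in C_e} <c, JF(x) d> + 1/2 ||d||^2 (the max is written as a sup) *)
Definition dir_obj (n m : nat) (K : set 'rV[R]_m) (e : 'rV[R]_m)
  (F : 'rV[R]_n -> 'rV[R]_m) (x d : 'rV[R]_n) : R :=
  sup [set dotp c ('d F x d) | c in Ce K e] + 2^-1 * enorm d ^+ 2.

Definition ls_cond (n m : nat) (K : set 'rV[R]_m) (e : 'rV[R]_m)
  (F : 'rV[R]_n -> 'rV[R]_m) (x d : 'rV[R]_n) (s : R) : Prop :=
  Kle K (F (x + s *: d) - F x) (s *: ('d F x d + (2^-1 * enorm d ^+ 2) *: e)).

Definition alg5_run (n m : nat) (K : set 'rV[R]_m) (e : 'rV[R]_m) (gamma : R)
  (F : 'rV[R]_n -> 'rV[R]_m) (x d : nat -> 'rV[R]_n) (t : nat -> R) : Prop :=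
  forall k,
  [/\ (forall d', dir_obj K e F (x k) (d k) <= dir_obj K e F (x k) d'),
      d k <> 0,
      (exists j : nat, [/\ t k = gamma ^+ j,
                           ls_cond K e F (x k) (d k) (gamma ^+ j) &
                           forall j' : nat, ls_cond K e F (x k) (d k) (gamma ^+ j') ->
                                            gamma ^+ j' <= gamma ^+ j])
    & x k.+1 = x k + t k *: d k].

End Defs.

(* Main.v *)
Require Import Defs.
From HB Require Import structures.
From mathcomp Require Import all_boot all_order all_algebra.
From mathcomp Require Import all_classical all_reals all_analysis.
From mathcomp Require Import ring lra.
Import Order.TTheory GRing.Theory Num.Theory.
Import numFieldNormedType.Exports.
Local Open Scope classical_set_scope.
Local Open Scope ring_scope.
Set Implicit Arguments. Unset Strict Implicit. Unset Printing Implicit Defensive.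


Section Dot.
Variable R : realType.
Variable p : nat.
Implicit Types u v w : 'rV[R]_p.

Lemma dotpC u v : dotp u v = dotp v u.
Proof. by apply: eq_bigr => i _; rewrite mulrC. Qed.

Lemma dotpDl u v w : dotp (u + v) w = dotp u w + dotp v w.
Proof. by rewrite /dotp -big_split; apply: eq_bigr => i _; rewrite mxE mulrDl. Qed.

Lemma dotpDr u v w : dotp w (u + v) = dotp w u + dotp w v.
Proof. by rewrite dotpC dotpDl !(dotpC w). Qed.

Lemma dotpZl (a : R) u v : dotp (a *: u) v = a * dotp u v.
Proof. by rewrite /dotp mulr_sumr; apply: eq_bigr => i _; rewrite mxE mulrA. Qed.

Lemma dotpZr (a : R) u v : dotp u (a *: v) = a * dotp u v.
Proof. by rewrite dotpC dotpZl dotpC. Qed.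

Lemma dotpNl u v : dotp (- u) v = - dotp u v.
Proof. by rewrite -scaleN1r dotpZl mulN1r. Qed.

Lemma dotpNr u v : dotp u (- v) = - dotp u v.
Proof. by rewrite dotpC dotpNl dotpC. Qed.

Lemma dotpBl u v w : dotp (u - v) w = dotp u w - dotp v w.
Proof. by rewrite dotpDl dotpNl. Qed.

Lemma dotpBr u v w : dotp w (u - v) = dotp w u - dotp w v.
Proof. by rewrite dotpDr dotpNr. Qed.

Lemma dotp0l v : dotp 0 v = 0.
Proof. by rewrite -(scale0r 0) dotpZl mul0r. Qed.

Lemma dotp0r v : dotp v 0 = 0.
Proof. by rewrite dotpC dotp0l. Qed.

Lemma dotp_ge0 v : 0 <= dotp v v.
Proof. by apply: sumr_ge0 => i _; rewrite -expr2 sqr_ge0. Qed.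

Lemma dotp_eq0 v : dotp v v = 0 -> v = 0.
Proof.
move=> /eqP; rewrite psumr_eq0; last by move=> i _; rewrite -expr2 sqr_ge0.
move=> /allP H; apply/rowP => j; rewrite mxE.
by have := H j (mem_index_enum _); rewrite -expr2 sqrf_eq0 => /eqP.
Qed.

Lemma enorm_sq v : enorm v ^+ 2 = dotp v v.
Proof. by rewrite /enorm sqr_sqrtr // dotp_ge0. Qed.

Lemma enorm_ge0 v : 0 <= enorm v.
Proof. exact: sqrtr_ge0. Qed.

Lemma dotp_young (l : R) u v : 0 < l ->
  2 * dotp u v <= l * dotp u u + l^-1 * dotp v v.
Proof.
move=> l0; rewrite /dotp !mulr_sumr -big_split /=; apply: ler_sum => i _.
have h : 0 <= l^-1 * (l * u 0 i - v 0 i) ^+ 2 by apply: mulr_ge0; [rewrite invr_ge0 ltW | exact: sqr_ge0].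
rewrite -subr_ge0.
suff -> : l * (u 0 i * u 0 i) + l^-1 * (v 0 i * v 0 i) - 2 * (u 0 i * v 0 i)
  = l^-1 * (l * u 0 i - v 0 i) ^+ 2 by [].
by field; rewrite gt_eqF.
Qed.

Lemma dotp_sq2 u v : dotp (u + v) (u + v) <= 2 * dotp u u + 2 * dotp v v.
Proof.
have := dotp_young u v (ltr01 : (0:R) < 1).
rewrite !dotpDl !dotpDr invr1 !mul1r (dotpC v u). lra.
Qed.

Lemma cauchy_schwarz u v : dotp u v <= enorm u * enorm v.
Proof.
have [u0|unz] := eqVneq (enorm u) 0.
  have : dotp u u = 0 by rewrite -enorm_sq u0 expr0n.
  by move/dotp_eq0 => ->; rewrite dotp0l mulr_ge0 ?enorm_ge0.
have [v0|vnz] := eqVneq (enorm v) 0.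
  have : dotp v v = 0 by rewrite -enorm_sq v0 expr0n.
  by move/dotp_eq0 => ->; rewrite dotp0r mulr_ge0 ?enorm_ge0.
have a0 : 0 < enorm u by rewrite lt_def unz enorm_ge0.
have b0 : 0 < enorm v by rewrite lt_def vnz enorm_ge0.
have := dotp_young u v (divr_gt0 b0 a0).
rewrite -!enorm_sq invf_div => H.
have E : enorm v / enorm u * enorm u ^+ 2 + enorm u / enorm v * enorm v ^+ 2
  = 2 * (enorm u * enorm v) by field; apply/andP; split.
rewrite E in H; rewrite -(ler_pM2l (ltr0Sn _ 1)); exact: H.
Qed.

Lemma enorm_triangle u v : enorm (u + v) <= enorm u + enorm v.
Proof.
rewrite -(ler_pXn2r (_ : 0 < 2)%N) ?nnegrE ?addr_ge0 ?enorm_ge0 //.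
rewrite enorm_sq dotpDl !dotpDr (dotpC v u) -!enorm_sq.
have := cauchy_schwarz u v; rewrite sqrrD; lra.
Qed.

Lemma enormN v : enorm (- v) = enorm v.
Proof. by rewrite /enorm dotpNl dotpNr opprK. Qed.

Lemma enormZ (a : R) v : enorm (a *: v) = `|a| * enorm v.
Proof. by rewrite /enorm dotpZl dotpZr mulrA -expr2 sqrtrM ?sqr_ge0 // sqrtr_sqr. Qed.

Lemma mxnorm_le_enorm v : `|v| <= enorm v.
Proof.
have -> : `|v| = mx_norm v by []. rewrite mx_normrE; apply: bigmax_le => [|[i j] _] /=; first exact: enorm_ge0.
rewrite -[`|v i j|]sqrtr_sqr /enorm ler_sqrt ?dotp_ge0 //.
rewrite /dotp (bigD1 j) //= -expr2 (ord1 i) lerDl.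
by apply: sumr_ge0 => k _; rewrite -expr2 sqr_ge0.
Qed.

End Dot.



Section Cone.
Variable R : realType.
Variable m : nat.
Variable K : set 'rV[R]_m.
Hypothesis hK : good_cone K.

Lemma K0 : K 0.
Proof.
case: hK => _ _ Kc _ [z /interior_subset Kz].
by have := Kc 0 z (lexx _) Kz; rewrite scale0r.
Qed.

Lemma KZ (t : R) u : 0 <= t -> K u -> K (t *: u).
Proof. by case: hK => _ _ Kc _ _; apply: Kc. Qed.

Lemma KD u v : K u -> K v -> K (u + v).
Proof.
case: hK => _ Kcv _ _ _ Ku Kv.
have h2 : (0:R) <= 2 by [].
have := Kcv 2^-1 (2 *: u) (2 *: v).
rewrite !scalerA (_ : 1 - 2^-1 = (2^-1 : R)); last by field.
rewrite mulVf ?pnatr_eq0 // !scale1r; apply => //.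
- by rewrite invr_ge0 h2 /= invf_le1 // ler1n.
- exact: KZ.
- exact: KZ.
Qed.

Lemma Kle_trans u v w : Kle K u v -> Kle K v w -> Kle K u w.
Proof.
rewrite /Kle => h1 h2; have := KD h2 h1.
by rewrite addrA subrK.
Qed.

Lemma int_ball z : interior K z ->
  exists2 eps : R, 0 < eps & forall v, `|v| < eps -> K (z - v).
Proof.
move=> /nbhs_ballP [eps eps0 H]; exists eps => // v vlt.
apply: H; rewrite -ball_normE /ball_ /=.
by rewrite opprB addrC subrK.
Qed.

Lemma dual_int c z (s : R) : Kdual K c -> K (z - s *: c) -> s * dotp c c <= dotp c z.
Proof. by move=> Hc /Hc; rewrite dotpBr dotpZr subr_ge0. Qed.

Lemma small_in z c (s : R) eps : 0 <= s -> s * enorm c < eps ->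
  (forall v, `|v| < eps -> K (z - v)) -> K (z - s *: c).
Proof.
move=> s0 slt H; apply: H; apply: le_lt_trans (mxnorm_le_enorm _) _.
by rewrite enormZ ger0_norm.
Qed.

End Cone.



Section CeSec.
Variable R : realType.
Variable m : nat.
Variable K : set 'rV[R]_m.
Hypothesis hK : good_cone K.
Variable e : 'rV[R]_m.
Hypothesis he : interior K e.

Lemma Ce_bound : exists2 Bn : R, 0 < Bn & forall c, Ce K e c -> enorm c <= Bn.
Proof.
have [eps eps0 H] := int_ball he.
exists (1 + 4 / eps); first by rewrite ltr_wpDr // divr_ge0 // ltW.
move=> c [Hc ce].
set r := enorm c.
have r0 : 0 <= r := enorm_ge0 c.
set s := eps / (2 * (r + 1)).
have s0 : 0 <= s by apply: divr_ge0; [exact: ltW | apply: mulr_ge0 => //; exact: addr_ge0].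
have hs : s * r < eps.
  rewrite /s mulrAC ltr_pdivrMr ?mulr_gt0 ?ltr_wpDl //.
  rewrite ltr_pM2l //; lra.
have := dual_int Hc (small_in s0 hs H).
rewrite ce -enorm_sq -/r /s => h.
have h2 : eps * r ^+ 2 <= 2 * (r + 1).
  by move: h; rewrite mulrAC ler_pdivrMr ?mulr_gt0 ?ltr_wpDl // mul1r.
have h3 : (r - 1) * eps <= 4.
  case: (lerP r 1) => r1; first by nra.
  rewrite leNgt; apply/negP => h4.
  have h5 : 4 * r < (r - 1) * eps * r by rewrite ltr_pM2r //; lra.
  have h6 : 0 <= eps * r by rewrite mulr_ge0 // ltW.
  lra.
by rewrite -lerBlDl ler_pdivlMr.
Qed.

Lemma Ce_lower c : Ce K e c -> (dotp e e + 1)^-1 <= dotp c c.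
Proof.
move=> [_ ce].
have l0 : 0 < dotp e e + 1 by rewrite ltr_wpDl ?dotp_ge0.
have := dotp_young c e l0.
rewrite ce => h.
have h1 : (dotp e e + 1)^-1 * dotp e e <= 1.
  by rewrite mulrC ler_pdivrMr // mul1r lerDl.
have h3 : 1 <= (dotp e e + 1) * dotp c c by lra.
by rewrite -(ler_pM2l l0) mulfV ?gt_eqF.
Qed.

Lemma Ce_pos z : interior K z ->
  exists2 del : R, 0 < del & forall c, Ce K e c -> del <= dotp c z.
Proof.
move=> /int_ball [eps eps0 H].
have [Bn Bn0 HB] := Ce_bound.
have l0 : 0 < dotp e e + 1 by rewrite ltr_wpDl ?dotp_ge0.
set s := eps / (2 * Bn).
have s0 : 0 < s by rewrite divr_gt0 // mulr_gt0.
exists (s * (dotp e e + 1)^-1); first by rewrite mulr_gt0 // invr_gt0.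
move=> c hc.
have hs : s * enorm c < eps.
  apply: le_lt_trans (_ : s * Bn < eps); first by rewrite ler_pM2l // HB.
  rewrite /s mulrAC ltr_pdivrMr ?mulr_gt0 // ltr_pM2l //; lra.
have := dual_int (proj1 hc) (small_in (ltW s0) hs H).
apply: le_trans; rewrite ler_pM2l //; exact: Ce_lower.
Qed.

End CeSec.



Lemma limit_le (R : realType) (a b k : R) :
  (forall t, 0 < t <= 1 -> a <= b + t * k) -> a <= b.
Proof.
move=> H; rewrite leNgt; apply/negP => ab.
set D := 2 * (`|k| + 1 + (a - b)).
have D0 : 0 < D by rewrite /D; have := normr_ge0 k; lra.
set t := (a - b) / D.
have tD : t * D = a - b by rewrite /t mulfVK ?gt_eqF.
have t0 : 0 < t by rewrite divr_gt0 ?subr_gt0.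
have t1 : t <= 1.
  rewrite /t ler_pdivrMr // mul1r /D; have := normr_ge0 k; lra.
have := H t (introT andP (conj t0 t1)).
have hk : t * k <= t * `|k| by rewrite ler_pM2l // ler_norm.
have e1 : t * `|k| = t * D / 2 - t * (1 + (a - b)) by rewrite /D; field.
have e2 : 0 < t * (1 + (a - b)) by rewrite mulr_gt0 //; lra.
lra.
Qed.

Lemma dotp_cont (R : realType) (p : nat) (a : 'rV[R]_p) :
  continuous (fun y : 'rV[R]_p => dotp (y - a) (y - a)).
Proof.
move=> x; rewrite /dotp.
apply: (@cvg_big _ _ +%R 0 xpredT add_continuous); first exact: nbhs_filter.
move=> i _.
rewrite (_ : (fun y : 'rV[R]_p => (y - a) 0 i * (y - a) 0 i) =
   (fun y => (y 0 i - a 0 i) * (y 0 i - a 0 i))); last first.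
  by apply: funext => y; rewrite !mxE.
rewrite !mxE.
have hc : (fun y : 'rV[R]_p => y 0 i - a 0 i) @ x --> x 0 i - a 0 i.
  have := cvgB (@coord_continuous R 1 p 0 i x) (@cvg_cst _ (a 0 i) _ (nbhs x) _).
  exact.
exact: (cvgM hc hc).
Qed.



Lemma dotp_exp (R : realType) p (c w : 'rV[R]_p) (t : R) :
  dotp (c + t *: w) (c + t *: w) = dotp c c + 2 * t * dotp c w + t ^+ 2 * dotp w w.
Proof. rewrite !dotpDl !dotpDr !dotpZl !dotpZr (dotpC w c); ring. Qed.

Section Bipolar.
Variable R : realType.
Variable m : nat.
Variable K : set 'rV[R]_m.
Hypothesis hK : good_cone K.
Variable e : 'rV[R]_m.
Hypothesis he : interior K e.

Lemma small_scale (eps r : R) : 0 < eps -> 0 <= r ->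
  0 < eps / (2 * (r + 1)) /\ eps / (2 * (r + 1)) * r < eps.
Proof.
move=> eps0 r0; split; first by rewrite divr_gt0 // mulr_gt0 //; lra.
rewrite mulrAC ltr_pdivrMr ?mulr_gt0 //; last by lra.
rewrite ltr_pM2l //; lra.
Qed.

Lemma dual_e_pos c : Kdual K c -> c <> 0 -> 0 < dotp c e.
Proof.
move=> Hc cn0.
have [eps eps0 H] := int_ball he.
have [s0 hs] := small_scale eps0 (enorm_ge0 c).
have := dual_int Hc (small_in (ltW s0) hs H).
apply: lt_le_trans; rewrite mulr_gt0 // lt_def dotp_ge0 andbT.
by apply/eqP => /dotp_eq0.
Qed.

Lemma bipolar p : (forall c, Ce K e c -> 0 <= dotp c p) -> K p.
Proof.
move=> Hp; have [//|nKp] := pselect (K p).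
exfalso.
have pn0 : p <> 0 by move=> p0; apply: nKp; rewrite p0; exact: K0.
have pp0 : 0 < dotp p p by rewrite lt_def dotp_ge0 andbT; apply/eqP => /dotp_eq0.
set M := 16 * dotp p p.
have M0 : 0 < M by rewrite mulr_gt0.
set A := K `&` [set y | dotp y y <= M].
set f := fun y : 'rV[R]_m => dotp (y - p) (y - p).
have A0 : A 0 by split; [exact: K0 | rewrite /= dotp0l ltW].
have cA : compact A.
  apply: bounded_closed_compact.
    rewrite /= /bounded_near.
    apply: filterS (nbhs_pinfty_ge (num_real (Num.sqrt M))) => r hr y [_ /= hy].
    apply: le_trans (mxnorm_le_enorm y) (le_trans _ hr).
    by rewrite /enorm ler_sqrt // ltW.
  apply: closedI; first by case: hK.
  have -> : [set y | dotp y y <= M] =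
    (fun y : 'rV[R]_m => dotp (y - 0) (y - 0)) @^-1` [set x | x <= M].
    by apply: funext => y; rewrite /= subr0.
  apply: preimage_closed; last exact: closed_le.
  by move=> y _; apply: dotp_cont.
have fc : {within A, continuous f}.
  by apply: continuous_subspaceT; exact: dotp_cont.
have [ys ysA ysmin] := EVT_min_rV (ex_intro _ 0 A0 : A !=set0) cA fc.
move/set_mem: ysA => ysA.
set c := ys - p.
have VI z : A z -> 0 <= dotp c (z - ys).
  move=> Az.
  have Hz : forall t : R, 0 < t <= 1 -> 0 <= 2 * dotp c (z - ys) + t * dotp (z - ys) (z - ys).
    move=> t /andP[t0 t1].
    have Aw : A (ys + t *: (z - ys)).
      have -> : ys + t *: (z - ys) = t *: z + (1 - t) *: ys.
        by rewrite scalerBr scalerBl scale1r addrC -!addrA (addrC (- _)) addrA.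
      split.
        by case: hK => _ Kcv _ _ _; apply: Kcv => //; [rewrite ltW | case: Az | case: ysA].
      rewrite /= !dotpDl !dotpDr !dotpZl !dotpZr.
      have hzz := proj2 Az; have hyy := proj2 ysA; move: hzz hyy => /= hzz hyy.
      have hd := dotp_ge0 (z - ys); rewrite dotpBl !dotpBr in hd.
      have t1' : 0 <= 1 - t by lra.
      have := mulr_ge0 (mulr_ge0 (ltW t0) t1') hd.
      have := mulr_ge0 (ltW t0) (dotp_ge0 z).
      have := mulr_ge0 t1' (dotp_ge0 ys).
      rewrite (dotpC ys z). nra.
    have := ysmin _ (mem_set Aw); rewrite /f.
    have -> : ys + t *: (z - ys) - p = c + t *: (z - ys) by rewrite /c addrAC.
    rewrite dotp_exp => h.
    have : 0 <= t * (2 * dotp c (z - ys) + t * dotp (z - ys) (z - ys)) by lra.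
    by rewrite pmulr_rge0.
  have := limit_le (a := 0) (b := 2 * dotp c (z - ys)) (k := dotp (z - ys) (z - ys)).
  by move=> /(_ Hz); rewrite pmulr_rge0.
have h1 := VI 0 A0; rewrite sub0r dotpNr oppr_ge0 in h1.
have ysK : K ys by case: ysA.
have hfy : f ys <= f 0 := ysmin _ (mem_set A0).
have A2 : A (2 *: ys).
  split; first exact: KZ.
  rewrite /= dotpZl dotpZr.
  have := dotp_sq2 (ys - p) p; rewrite subrK.
  move: hfy; rewrite /f sub0r dotpNl dotpNr opprK /M => hfy hsq.
  lra.
have h2 := VI _ A2.
rewrite (_ : 2 *: ys - ys = ys) in h2; last first.
  by rewrite scalerDl scale1r addrK.
have cys : dotp c ys = 0 by apply/eqP; rewrite eq_le h1 h2.
have cK : Kdual K c.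
  move=> y Ky.
  set Y := dotp y y.
  have Y0 : 0 <= Y := dotp_ge0 y.
  set lam := M / (M + Y).
  have lam0 : 0 < lam by rewrite divr_gt0 // ltr_wpDr.
  have Ay : A (lam *: y).
    split; first by apply: KZ => //; rewrite ltW.
    rewrite /= dotpZl dotpZr -/Y.
    have l1 : lam <= 1 by rewrite ler_pdivrMr ?ltr_wpDr // mul1r lerDl.
    have l2 : lam * Y <= M.
      by rewrite /lam mulrAC ler_pdivrMr ?ltr_wpDr // ler_pM2l // lerDr ltW.
    have := mulr_ge0 (ltW lam0) Y0; nra.
  have := VI _ Ay; rewrite dotpBr cys subr0 dotpZr pmulr_rge0 //.
have cn0 : c <> 0.
  by move=> c0; apply: nKp; move/eqP: c0; rewrite subr_eq0 => /eqP <-.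
have cp : dotp c p < 0.
  have -> : p = ys - c by rewrite /c opprB addrC subrK.
  rewrite dotpBr cys sub0r oppr_lt0 lt_def dotp_ge0 andbT.
  by apply/eqP => /dotp_eq0.
have ce0 := dual_e_pos cK cn0.
have hc' : Ce K e ((dotp c e)^-1 *: c).
  split; last by rewrite dotpZl mulVf ?gt_eqF.
  move=> y Ky; rewrite dotpZl; apply: mulr_ge0; [by rewrite invr_ge0 ltW | exact: cK].
have := Hp _ hc'; rewrite dotpZl pmulr_rge0 ?invr_gt0 //.
by rewrite leNgt cp.
Qed.

End Bipolar.



Section Sig.
Variable R : realType.
Variable m : nat.
Variable K : set 'rV[R]_m.
Hypothesis hK : good_cone K.
Variable e : 'rV[R]_m.
Hypothesis he : interior K e.
Hypothesis hCe : Ce K e !=set0.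

Local Notation sig v := (sup [set dotp c v | c in Ce K e]).

Lemma sig_has v : has_sup [set dotp c v | c in Ce K e].
Proof.
split; first by case: hCe => c hc; exists (dotp c v); exists c.
have [Bn Bn0 HB] := Ce_bound he.
exists ((Bn ^+ 2 + dotp v v) / 2) => _ [c hc <-].
have := dotp_young c v (ltr01 : (0:R) < 1); rewrite invr1 !mul1r => h.
have h2 : dotp c c <= Bn ^+ 2.
  have h3 := HB c hc; have h4 := enorm_ge0 c; rewrite -enorm_sq; nra.
rewrite ler_pdivlMr //; lra.
Qed.

Lemma sig_ub c v : Ce K e c -> dotp c v <= sig v.
Proof. by move=> hc; apply: sup_upper_bound (sig_has v) _ _; exists c. Qed.

Lemma sig_le v (a : R) : (forall c, Ce K e c -> dotp c v <= a) -> sig v <= a.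
Proof.
move=> H; apply: ge_sup; first by case: hCe => c hc; exists (dotp c v); exists c.
by move=> _ [c hc <-]; apply: H.
Qed.

Lemma sig_conv (a b : R) u v : 0 <= a -> 0 <= b ->
  sig (a *: u + b *: v) <= a * sig u + b * sig v.
Proof.
move=> a0 b0; apply: sig_le => c hc.
rewrite dotpDr !dotpZr; apply: lerD; apply: ler_wpM2l => //; exact: sig_ub.
Qed.

Lemma sig_add u v : sig (u + v) <= sig u + sig v.
Proof. by have := sig_conv u v ler01 ler01; rewrite !scale1r !mul1r. Qed.

Lemma sig0 : sig 0 <= 0.
Proof. by apply: sig_le => c _; rewrite dotp0r. Qed.

End Sig.



Lemma sq_to_norm (R : realType) (a b r : R) : 0 <= a -> 0 <= b ->
  a ^+ 2 <= r * b ^+ 2 -> a <= Num.sqrt r * b.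
Proof.
move=> a0 b0 h; case: (ltrP r 0) => hr.
  have -> : Num.sqrt r = 0 by apply/eqP; rewrite sqrtr_eq0 ltW.
  rewrite mul0r.
  have := mulr_ge0 b0 b0; nra.
have -> : Num.sqrt r * b = Num.sqrt (r * b ^+ 2) by rewrite sqrtrM // sqrtr_sqr ger0_norm.
by rewrite -[a]ger0_norm // -sqrtr_sqr ler_sqrt // mulr_ge0 // sqr_ge0.
Qed.

Section Main.
Variables (R : realType) (n m : nat) (K : set 'rV[R]_m) (F : 'rV[R]_n -> 'rV[R]_m)
  (l mu e : 'rV[R]_m) (gamma : R) (x d : nat -> 'rV[R]_n) (t : nat -> R).
Hypotheses (hK : good_cone K) (hl : interior K l) (hsm : Ksmooth K F l)
  (hmu : interior K mu) (hsc : strongly_Kconvex K F mu) (he : interior K e)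
  (hg : 0 < gamma < 1) (hrun : alg5_run K e gamma F x d t).

Local Notation sig v := (sup [set dotp c v | c in Ce K e]).

Lemma Ce_ne : Ce K e !=set0.
Proof.
have [//|nCe] := pselect (Ce K e !=set0); exfalso.
have E v : [set dotp c v | c in Ce K e] = set0.
  by apply/seteqP; split => // y [c hc _]; apply: nCe; exists c.
have [hmin hd0 _ _] := hrun 0.
have en0 : enorm (0 : 'rV[R]_n) = 0 by rewrite /enorm dotp0l sqrtr0.
have := hmin 0; rewrite /dir_obj !E sup0 !add0r en0 expr0n mulr0 => h.
have h2 : dotp (d 0) (d 0) <= 0 by rewrite -enorm_sq; lra.
by apply: hd0; apply: dotp_eq0; apply/eqP; rewrite eq_le h2 dotp_ge0.
Qed.

Lemma Lmax_ub c : Ce K e c -> dotp c l <= sig l.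
Proof. by move=> hc; exact: (sig_ub he Ce_ne l hc). Qed.

Lemma Lmax_pos : 0 < sig l.
Proof.
have [del del0 Hd] := Ce_pos he hl.
case: Ce_ne => c hc.
by apply: lt_le_trans del0 (le_trans (Hd c hc) (Lmax_ub hc)).
Qed.

Lemma mumin_lb c : Ce K e c -> inf [set dotp c mu | c in Ce K e] <= dotp c mu.
Proof.
move=> hc; apply: ge_inf; last by exists c.
exists 0 => _ [c' hc' <-]; apply: (proj1 hc'); exact: interior_subset.
Qed.

Lemma mumin_pos : 0 < inf [set dotp c mu | c in Ce K e].
Proof.
have [del del0 Hd] := Ce_pos he hmu.
apply: lt_le_trans del0 _; apply: lb_le_inf.
  by case: Ce_ne => c hc; exists (dotp c mu); exists c.
by move=> _ [c hc <-]; apply: Hd.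
Qed.

Lemma VI k w : sig ('d F (x k) (d k)) <= sig ('d F (x k) w) + dotp (d k) (w - d k).
Proof.
have [hmin _ _ _] := hrun k.
apply: (@limit_le _ _ _ (2^-1 * dotp (w - d k) (w - d k))) => s /andP[s0 s1].
have := hmin (d k + s *: (w - d k)); rewrite /dir_obj.
have -> : 'd F (x k) (d k + s *: (w - d k)) =
    (1 - s) *: 'd F (x k) (d k) + s *: 'd F (x k) w.
  by rewrite linearD linearZ linearB /=; apply/rowP => i; rewrite !mxE; ring.
rewrite !enorm_sq dotp_exp => h.
have s1' : 0 <= 1 - s by lra.
have hc := sig_conv he Ce_ne ('d F (x k) (d k)) ('d F (x k) w) s1' (ltW s0).
rewrite -(ler_pM2l s0).
lra.
Qed.

Lemma sJd k : sig ('d F (x k) (d k)) <= - dotp (d k) (d k).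
Proof.
have := VI k 0; rewrite linear0 sub0r dotpNr.
have := sig0 Ce_ne; lra.
Qed.

Lemma ls_ok k s : 0 <= s -> s * sig l <= 1 -> ls_cond K e F (x k) (d k) s.
Proof.
move=> s0 hs; rewrite /ls_cond.
have h1 := hsm (x k) (x k + s *: d k).
rewrite (_ : x k + s *: d k - x k = s *: d k) in h1; last by rewrite addrAC subrr add0r.
rewrite linearZ /= enormZ ger0_norm // in h1.
apply: (Kle_trans hK h1); rewrite /Kle.
have -> : s *: ('d F (x k) (d k) + (2^-1 * enorm (d k) ^+ 2) *: e) -
   (s *: 'd F (x k) (d k) + (2^-1 * (s * enorm (d k)) ^+ 2) *: l) =
   (s * (2^-1 * enorm (d k) ^+ 2)) *: (e - s *: l).
  by apply/rowP => i; rewrite !mxE; ring.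
apply: (KZ hK).
  by apply: mulr_ge0 => //; apply: mulr_ge0; [rewrite invr_ge0 | exact: sqr_ge0].
apply: (bipolar hK he) => c hc.
rewrite dotpBr dotpZr (proj2 hc) subr_ge0.
exact: le_trans (ler_wpM2l s0 (Lmax_ub hc)) hs.
Qed.


Lemma gamma_pow_ge0 j : 0 <= gamma ^+ j.
Proof. by apply: exprn_ge0; case/andP: hg => /ltW. Qed.

Lemma tge k : Num.min (gamma / sig l) 1 <= t k.
Proof.
have [_ _ [j [tj hls hmax]] _] := hrun k.
suff [j' [hl' hj']] : exists j', ls_cond K e F (x k) (d k) (gamma ^+ j') /\
    Num.min (gamma / sig l) 1 <= gamma ^+ j'.
  by rewrite tj; apply: le_trans hj' (hmax _ hl').
have L0 := Lmax_pos.
case/andP: hg => g0 g1.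
case: (lerP (sig l) 1) => hL.
  exists 0%N; split; last by rewrite expr0 ge_min lexx orbT.
  by apply: ls_ok; rewrite expr0 ?ler01 // mul1r.
have ex : exists j, gamma ^+ j * sig l <= 1.
  have hc : (GRing.exp gamma : R ^nat) @ \oo --> 0.
    by apply: cvg_expr; rewrite ger0_norm // ltW.
  have hi : 0 < (sig l)^-1 by rewrite invr_gt0.
  have := cvgr_lt 0 hc _ hi.
  case=> N _ HN; exists N.
  by rewrite -ler_pdivlMr // mul1r; apply: ltW; apply: (HN N) => /=.
case: (ex_minnP ex) => j0 Pj0 minj0.
exists j0; split; first by apply: ls_ok => //; exact: gamma_pow_ge0.
case: j0 Pj0 minj0 => [|j1] Pj0 minj0.
  by move: Pj0; rewrite expr0 mul1r leNgt hL.
have nP : 1 < gamma ^+ j1 * sig l.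
  rewrite ltNge; apply/negP => /minj0; by rewrite ltnn.
rewrite ge_min; apply/orP; left.
rewrite ler_pdivrMr // exprS -mulrA.
have := ltW nP; rewrite -(ler_pM2l g0) mulr1; done.
Qed.

Lemma t_ge0 k : 0 <= t k.
Proof. by have [_ _ [j [-> _ _]] _] := hrun k; exact: gamma_pow_ge0. Qed.

Lemma mono k : Kle K (F (x k.+1)) (F (x k)).
Proof.
have [_ _ [j [tj hls _]] hx] := hrun k.
rewrite -tj in hls; rewrite /Kle hx; rewrite /ls_cond /Kle in hls.
set v := 'd F (x k) (d k) + (2^-1 * enorm (d k) ^+ 2) *: e.
have hv : K (- v).
  apply: (bipolar hK he) => c hc.
  rewrite dotpNr /v dotpDr dotpZr (proj2 hc) mulr1 oppr_ge0.
  have := sig_ub he Ce_ne ('d F (x k) (d k)) hc.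
  have := sJd k; rewrite -enorm_sq => h1 h2.
  have := sqr_ge0 (enorm (d k)); lra.
have := KD hK hls (KZ hK (t_ge0 k) hv).
suff -> : F (x k) - F (x k + t k *: d k) =
   t k *: v - (F (x k + t k *: d k) - F (x k)) + t k *: - v by [].
by rewrite scalerN addrAC subrr add0r opprB.
Qed.


Lemma step k y : Kle K (F y) (F (x k.+1)) ->
  dotp (x k.+1 - y) (x k.+1 - y) <=
  (1 - t k * inf [set dotp c mu | c in Ce K e]) * dotp (x k - y) (x k - y).
Proof.
move=> hy.
have [_ _ [j [tj hls _]] hx] := hrun k.
rewrite -tj /ls_cond /Kle in hls.
rewrite /Kle hx in hy.
have t0 := t_ge0 k.
set mm := inf [set dotp c mu | c in Ce K e].
set J := 'd F (x k).
set b := 2^-1 * enorm (d k) ^+ 2.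
set a := 2^-1 * enorm (y - x k) ^+ 2.
have a0 : 0 <= a by apply: mulr_ge0; [rewrite invr_ge0 | exact: sqr_ge0].
have h1 := VI k (d k + (y - x k)).
rewrite (_ : d k + (y - x k) - d k = y - x k) in h1; last by rewrite addrC addKr.
rewrite linearD in h1.
have h2 := sig_add he Ce_ne (J (d k)) (J (y - x k)).
have h3 : sig (J (y - x k)) <= - (t k * dotp (d k) (d k)) + t k * b - a * mm.
  apply: (sig_le Ce_ne) => c hc.
  have hs := hsc (x k) y; rewrite /Kle in hs.
  have hsum := KD hK (KD hK hs hy) hls.
  have := proj1 hc _ hsum.
  have -> : F y - F (x k) - ('d F (x k) (y - x k) + a *: mu) +
     (F (x k + t k *: d k) - F y) +
     (t k *: ('d F (x k) (d k) + b *: e) - (F (x k + t k *: d k) - F (x k))) =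
     t k *: J (d k) + (t k * b) *: e - a *: mu - J (y - x k).
    by apply/rowP => i; rewrite !mxE; ring.
  rewrite !dotpBr !dotpDr !dotpZr (proj2 hc) mulr1 => h.
  have h4 := ler_wpM2l t0 (le_trans (sig_ub he Ce_ne (J (d k)) hc) (sJd k)).
  have h5 := ler_wpM2l a0 (mumin_lb hc).
  lra.
rewrite hx (_ : x k + t k *: d k - y = (x k - y) + t k *: d k); last by rewrite addrAC.
rewrite dotp_exp.
have ha : a = 2^-1 * dotp (x k - y) (x k - y).
  by rewrite /a enorm_sq -opprB dotpNl dotpNr opprK.
have hD : dotp (x k - y) (d k) = - dotp (d k) (y - x k).
  by rewrite dotpC -opprB dotpNr.
rewrite hD; rewrite ha in h3.
have h6 : - dotp (d k) (y - x k) <= sig (J (y - x k)) by lra.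
have h7 := ler_wpM2l t0 (le_trans h6 h3).
have hb : b = 2^-1 * dotp (d k) (d k) by rewrite /b enorm_sq.
rewrite hb in h7.
nra.
Qed.


Local Notation q := (Num.sqrt (1 - Num.min (gamma / sig l) 1 * inf [set dotp c mu | c in Ce K e])).

Lemma tmin_pos : 0 < Num.min (gamma / sig l) 1.
Proof.
case/andP: hg => g0 _; rewrite lt_min ltr01 andbT divr_gt0 //; exact: Lmax_pos.
Qed.

Lemma stepn k y : Kle K (F y) (F (x k.+1)) -> enorm (x k.+1 - y) <= q * enorm (x k - y).
Proof.
move=> hy; apply: sq_to_norm; rewrite ?enorm_ge0 // !enorm_sq.
apply: le_trans (step hy) _; apply: ler_wpM2r; first exact: dotp_ge0.
rewrite lerD2l lerN2; apply: ler_wpM2r; first exact: ltW mumin_pos.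
exact: tge.
Qed.

Lemma q_ge0 : 0 <= q.
Proof. exact: sqrtr_ge0. Qed.

Lemma q_lt1 : q < 1.
Proof.
have h := mulr_gt0 tmin_pos mumin_pos.
case: (ltrP (1 - Num.min (gamma / sig l) 1 * inf [set dotp c mu | c in Ce K e]) 0) => hr.
  by have -> : q = 0 by apply/eqP; rewrite sqrtr_eq0 ltW.
have : q < Num.sqrt 1 by rewrite ltr_sqrt //; lra.
by rewrite sqrtr1.
Qed.

Lemma mono_gen k j : (k <= j)%N -> Kle K (F (x j)) (F (x k)).
Proof.
elim: j => [|j IH] hkj.
  by move: hkj; rewrite leqn0 => /eqP ->; rewrite /Kle subrr; exact: K0.
move: hkj; rewrite leq_eqVlt => /orP[/eqP ->|hk].
  by rewrite /Kle subrr; exact: K0.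
exact: (Kle_trans hK (mono j) (IH hk)).
Qed.

Lemma geo y k : (forall i, (i < k)%N -> Kle K (F y) (F (x i.+1))) ->
  enorm (x k - y) <= q ^+ k * enorm (x 0 - y).
Proof.
elim: k => [|k IH] H; first by rewrite expr0 mul1r.
apply: le_trans (stepn (H k (ltnSn k))) _.
rewrite exprS -mulrA; apply: ler_wpM2l; first exact: q_ge0.
by apply: IH => i hi; apply: H; rewrite ltnS ltnW.
Qed.

Lemma geo_small (C eps : R) : 0 <= C -> 0 < eps ->
  \forall k \near \oo, q ^+ k * C < eps.
Proof.
move=> C0 eps0.
have hc : (GRing.exp q : R ^nat) @ \oo --> 0.
  by apply: cvg_expr; rewrite ger0_norm ?q_lt1 // q_ge0.
have hz : 0 < eps / (C + 1) by rewrite divr_gt0 //; lra.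
apply: filterS (cvgr_lt 0 hc _ hz) => k hk.
have qk0 : 0 <= q ^+ k by apply: exprn_ge0; exact: q_ge0.
move: hk; rewrite ltr_pdivlMr; last by lra.
move=> hk; apply: le_lt_trans hk; apply: ler_wpM2l => //; lra.
Qed.

Lemma conv_geo y (C : R) : 0 <= C -> (forall k, enorm (x k - y) <= q ^+ k * C) -> x @ \oo --> y.
Proof.
move=> C0 H; apply/cvgrPdist_lt => eps eps0.
apply: filterS (geo_small C0 eps0) => k hk.
apply: le_lt_trans (mxnorm_le_enorm _) _.
by rewrite -opprB enormN; apply: le_lt_trans (H k) hk.
Qed.

Lemma cvg_x : cvg (x @ \oo).
Proof.
have q1 := q_lt1.
set B0 := enorm (x 0%N - x 1%N) / (1 - q).
have B00 : 0 <= B0 by rewrite divr_ge0 ?enorm_ge0 // subr_ge0 ltW.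
have hB j : enorm (x 0%N - x j) <= B0.
  case: j => [|j]; first by rewrite subrr /enorm dotp0l sqrtr0.
  have h1 := enorm_triangle (x 0%N - x 1%N) (x 1%N - x j.+1).
  rewrite (_ : x 0%N - x 1%N + (x 1%N - x j.+1) = x 0%N - x j.+1) in h1; last first.
    by rewrite addrA subrK.
  have h2 := stepn (mono_gen (isT : (1 <= j.+1)%N)).
  rewrite /B0 ler_pdivlMr ?subr_gt0 //; lra.
have hkj k j : (k <= j)%N -> enorm (x k - x j) <= q ^+ k * B0.
  move=> hk; apply: le_trans (geo _) _.
    by move=> i hi; apply: mono_gen; apply: leq_trans hk.
  by apply: ler_wpM2l; [apply: exprn_ge0; exact: q_ge0 | exact: hB].
apply: cauchy_cvg; apply: cauchy_exP => eps eps0.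
case: (geo_small B00 eps0) => N _ HN.
exists (x N); exists N => // k /= hk.
rewrite -ball_normE /ball_ /=.
apply: le_lt_trans (mxnorm_le_enorm _) _.
apply: le_lt_trans (hkj _ _ hk) _; by apply: (HN N) => /=.
Qed.

End Main.


Unset Implicit Arguments.

Theorem lemma5p1 (R : realType) (n m : nat) (K : set 'rV[R]_m)
  (F : 'rV[R]_n -> 'rV[R]_m) (l mu e : 'rV[R]_m) (gamma : R)
  (x d : nat -> 'rV[R]_n) (t : nat -> R) :
  good_cone K ->
  (forall z, differentiable F z) ->
  interior K l -> Ksmooth K F l ->
  interior K mu -> strongly_Kconvex K F mu ->
  interior K e ->
  0 < gamma < 1 ->
  alg5_run K e gamma F x d t ->
  let Lmax := sup [set dotp c l | c in Ce K e] in
  let tmin := Num.min (gamma / Lmax) 1 in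
  let mumin := inf [set dotp c mu | c in Ce K e] in
  exists xs : 'rV[R]_n,
    [/\ x @ \oo --> xs,
        efficient K F xs &
        forall k : nat, enorm (x k.+1 - xs) <= Num.sqrt (1 - tmin * mumin) * enorm (x k - xs)].
Proof.
move=> hK hdiff hl hsm hmu hsc he hg hrun Lmax tmin mumin.
have hxs := cvg_x hK hl hsm hmu hsc he hg hrun.
set xs := lim (x @ \oo) in hxs.
have FK k : Kle K (F xs) (F (x k)).
  have hF : (F \o x) @ \oo --> F xs.
    apply: continuous_cvg; last exact: hxs.
    exact: differentiable_continuous.
  have hconv : (fun j => F (x k) - F (x j)) @ \oo --> F (x k) - F xs.
    exact: (cvgB (cvg_cst _) hF).
  have Kcl : closed K by case: hK.
  apply: (closed_cvg _ Kcl _ _ hconv).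
  by exists k => // j /= hj; exact: (mono_gen hK he hg hrun hj).
exists xs; split => //.
- move=> [xx [hle hneq]].
  have hall k : Kle K (F xx) (F (x k)) := Kle_trans hK hle (FK k).
  have hxx : x @ \oo --> xx.
    refine (conv_geo hl hmu he hg hrun (enorm_ge0 (x 0%N - xx)) _) => k. apply: (geo hK hl hsm hmu hsc he hg hrun) => i _; exact: hall.
  apply: hneq; congr F.
  exact: (cvg_unique _ hxx hxs).
- move=> k; exact: (stepn hK hl hsm hmu hsc he hg hrun (FK k.+1)).
Qed.
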